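(* Let $A,B,C\in \mathbb{C}^{n\times n}$ satisfy $ABA=ACA$. If $(AC)^{\#}$ and $(BA)^{\#}$ exist, then $(AC)^{\#}$ is similar to $(BA)^{\#}$.
   Context: A matrix $M\in \mathbb{C}^{n\times n}$ is group invertible if there exists $X$ with $MX=XM$, $XMX=X$, $MXM=M$; such $X$ is unique and denoted $M^{\#}$ (the group inverse). Two matrices $M,N$ are similar if $M=S^{-1}NS$ for some invertible $S$. *)

(* Defs.v *)
From mathcomp Require Import all_boot all_order all_algebra.
From mathcomp Require Import complex.
From mathcomp Require Import reals.
Set Implicit Arguments. Unset Strict Implicit. Unset Printing Implicit Defensive.
Import GRing.Theory Num.Theory.
Local Open Scope ring_scope.

Definition is_group_inverse (F : nzRingType) (n : nat) (M X : 'M[F]_n) : Prop :=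
  [/\ M *m X = X *m M, X *m M *m X = X & M *m X *m M = M].

Definition similar_mx (F : comUnitRingType) (n : nat) (M N : 'M[F]_n) : Prop :=
  exists S : 'M[F]_n, S \in unitmx /\ M = invmx S *m N *m S.

(* Main.v *)
Require Import Defs.
From mathcomp Require Import all_boot all_order all_algebra.
From mathcomp Require Import complex reals.
Import GRing.Theory Num.Theory.
Local Open Scope ring_scope.

Section G.
Variable F : fieldType.
Variable n : nat.
Implicit Types M N X Y W : 'M[F]_n.

Lemma gi_XXM {M X} : is_group_inverse M X -> X *m X *m M = X.
Proof. by case=> MX XMX _; rewrite -mulmxA -MX mulmxA. Qed.
Lemma gi_MXX {M X} : is_group_inverse M X -> M *m X *m X = X.
Proof. by case=> MX XMX _; rewrite MX. Qed.
Lemma gi_MMX {M X} : is_group_inverse M X -> M *m M *m X = M.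
Proof. by case=> MX XMX MXM; rewrite -mulmxA MX mulmxA. Qed.
Lemma gi_XMM {M X} : is_group_inverse M X -> X *m M *m M = M.
Proof. by case=> MX XMX MXM; rewrite -MX. Qed.

Lemma gi_intertw {M N X Y W} : is_group_inverse M X -> is_group_inverse N Y ->
  M *m W = W *m N -> X *m W *m Y = X *m X *m W.
Proof.
move=> gM gN MW.
have h1 : X *m W = X *m X *m W *m N.
  by rewrite -{1}(gi_XXM gM) -!mulmxA MW.
have h2 : X *m X *m W = X *m X *m X *m W *m N.
  by rewrite -[X *m X *m W]mulmxA {1}h1 !mulmxA.
rewrite h1 h2 -!mulmxA; congr (_ *m _); congr (_ *m _); congr (_ *m _).
by rewrite [N *m (N *m Y)]mulmxA (gi_MMX gN).
Qed.

Lemma ker_comp (P Q : 'M[F]_n) : (\rank P <= \rank Q)%N ->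
  forall v : 'M[F]_n, v *m (P *m invmx (row_ebase P) *m invmx (col_ebase Q) *m Q) = 0 ->
  v *m P = 0.
Proof.
move=> rPQ v.
have eP := mulmx_ebase P; have eQ := mulmx_ebase Q.
have uL1 := col_ebase_unit P; have uU1 := row_ebase_unit P.
have uL2 := col_ebase_unit Q; have uU2 := row_ebase_unit Q.
move: eP eQ uL1 uU1 uL2 uU2.
set L1 := col_ebase P; set U1 := row_ebase P; set L2 := col_ebase Q; set U2 := row_ebase Q.
move: rPQ; set r := \rank P; set s := \rank Q => rPQ eP eQ uL1 uU1 uL2 uU2.
have -> : P *m invmx U1 *m invmx L2 *m Q = L1 *m pid_mx r *m U2.
  rewrite -{1}eP -{1}eQ -!mulmxA mulKVmx // mulKmx //.
  by rewrite [pid_mx r *m (pid_mx s *m _)]mulmxA mul_pid_mx (minn_idPl rPQ) (minn_idPr (rank_leq_col P)).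
move/(congr1 (mulmx^~ (invmx U2 *m U1))).
rewrite mul0mx -eP !mulmxA mulmxK //.
Qed.
Lemma main_F (A B C X Y : 'M[F]_n) :
  A *m B *m A = A *m C *m A ->
  is_group_inverse (A *m C) X ->
  is_group_inverse (B *m A) Y ->
  exists S, S \in unitmx /\ X *m S = S *m Y.
Proof.
move=> hA gM gN.
have MA : A *m C *m A = A *m (B *m A) by rewrite -hA mulmxA.
have TA : B *m (A *m C) *m A = B *m A *m (B *m A).
  by rewrite -mulmxA MA !mulmxA.
have AT : A *m (B *m (A *m C)) = A *m C *m (A *m C).
  by rewrite !mulmxA hA.
move: MA TA AT gM gN.
set M := A *m C; set N := B *m A; set T := B *m M => MA TA AT gM gN.
clearbody M N.
have gM' := gM; have gN' := gN.
case: gM' => MX XMX MXM; case: gN' => NY YNY NYN.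
have rNM : (\rank N <= \rank M)%N.
  rewrite -(gi_XMM gN) -mulmxA -TA.
  apply: leq_trans (mxrankM_maxr _ _) _.
  apply: leq_trans (mxrankM_maxl _ _) _.
  exact: mxrankM_maxr.
set P : 'M[F]_n := 1%:M - M *m X.
set Q : 'M[F]_n := 1%:M - N *m Y.
have PM : P *m M = 0 by rewrite mulmxBl mul1mx MXM subrr.
have XP : X *m P = 0 by rewrite mulmxBr mulmx1 mulmxA XMX subrr.
have QY : Q *m Y = 0 by rewrite mulmxBl mul1mx (gi_MXX gN) subrr.
have QN : Q *m N = 0 by rewrite mulmxBl mul1mx NYN subrr.
have rPQ : (\rank P <= \rank Q)%N.
  have h1 : (\rank P <= n - \rank M)%N.
    rewrite -mxrank_ker; apply: mxrankS; by rewrite sub_kermx PM.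
  have h2 : (n - \rank N <= \rank Q)%N.
    rewrite -mxrank_ker; apply: mxrankS.
    have -> : kermx N = kermx N *m Q.
      by rewrite mulmxBr mulmx1 mulmxA mulmx_ker mul0mx subr0.
    exact: submxMl.
  apply: leq_trans h1 (leq_trans _ h2); exact: leq_sub2l.
set K := P *m invmx (row_ebase P) *m invmx (col_ebase Q) *m Q.
have XK : X *m K = 0 by rewrite /K !mulmxA XP !mul0mx.
have KY : K *m Y = 0 by rewrite /K -!mulmxA QY !mulmx0.
have KN : K *m N = 0 by rewrite /K -!mulmxA QN !mulmx0.
have XAY : X *m A *m Y = X *m X *m A := gi_intertw gM gN MA.
exists (X *m A + K); split; last first.
  by rewrite mulmxDr mulmxDl XK KY addr0 addr0 XAY mulmxA.
rewrite -row_free_unit -kermx_eq0; apply/eqP.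
set v := kermx _.
have vS : v *m (X *m A + K) = 0 := mulmx_ker _.
have wF : v *m X *m A *m (N *m Y) = v *m X *m A.
  have XAF : X *m A *m (N *m Y) = X *m A.
    rewrite mulmxA -(mulmxA X A N) -MA mulmxA -MX -!mulmxA [X *m (A *m Y)]mulmxA XAY.
    by rewrite !mulmxA (gi_MXX gM).
  by rewrite -(mulmxA v X A) -mulmxA XAF.
have uF : v *m K *m (N *m Y) = 0 by rewrite mulmxA -(mulmxA v) KN mulmx0 mul0mx.
move: vS; rewrite mulmxDr mulmxA => vS.
have w0 : v *m X *m A = 0.
  by rewrite -wF -[v *m X *m A]subr0 -vS opprD addNKr mulNmx uF oppr0.
have u0 : v *m K = 0 by move: vS; rewrite w0 add0r.
have vM : v *m M = 0.
  by rewrite -(gi_XMM gM) -mulmxA -AT !mulmxA w0 !mul0mx.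
have vP : v *m P = v by rewrite mulmxBr mulmx1 mulmxA vM mul0mx subr0.
by rewrite -vP (@ker_comp P Q rPQ v u0).
Qed.
End G.

Local Open Scope complex_scope.

Theorem corollary3p2 (R : realType) (n : nat) (A B C X Y : 'M[R[i]]_n) :
  A *m B *m A = A *m C *m A ->
  is_group_inverse (A *m C) X ->
  is_group_inverse (B *m A) Y ->
  similar_mx X Y.
Proof.
move=> hA gM gN.
have [S [uS XS]] := @main_F R[i] n A B C X Y hA gM gN.
exists (invmx S); split; first by rewrite unitmx_inv.
by rewrite invmxK -XS mulmxK.
Qed.
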